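(* Every statistically complete $S$-metric space is complete.
   Context: An $S$-metric on a nonempty set $X$ is a function $S:X^3\to[0,\infty)$ such that for all $x,y,z,a\in X$: $S(x,y,z)=0$ if and only if $x=y=z$, and $S(x,y,z)\le S(x,x,a)+S(y,y,a)+S(z,z,a)$. A sequence $\{x_n\}$ converges to $x$ if for every $\varepsilon>0$ there is $k$ with $S(x_n,x_n,x)<\varepsilon$ for all $n\ge k$; it is Cauchy if for every $\varepsilon>0$ there is $k$ with $S(x_n,x_n,x_m)<\varepsilon$ for all $n,m\ge k$; $(X,S)$ is complete if every Cauchy sequence converges. For $B\subset\mathbb N$ the natural density is $\delta(B)=\lim_{n\to\infty}\frac{|\{k\in B:k\le n\}|}{n}$ when the limit exists. A sequence $\{x_n\}$ is statistically convergent to $x\in X$ if for every $\varepsilon>0$, $\delta(\{n: S(x_n,x_n,x)\ge\varepsilon\})=0$; it is statistically Cauchy if for every $\varepsilon>0$ there exists $N\in\mathbb N$ with $\delta(\{n: S(x_n,x_n,x_N)\ge\varepsilon\})=0$. $(X,S)$ is statistically complete if every statistically Cauchy sequence in $X$ is statistically convergent (to some point of $X$). *)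

(* Defs.v *)
From Stdlib Require Import Reals Lra Lia Classical ClassicalEpsilon.
Open Scope R_scope.

Definition is_Smetric {X : Type} (S : X -> X -> X -> R) : Prop :=
  (forall x y z, 0 <= S x y z) /\
  (forall x y z, S x y z = 0 <-> (x = y /\ y = z)) /\
  (forall x y z a, S x y z <= S x x a + S y y a + S z z a).

Definition S_converges {X : Type} (S : X -> X -> X -> R) (u : nat -> X) (x : X) : Prop :=
  forall eps, eps > 0 -> exists k, forall n, (n >= k)%nat -> S (u n) (u n) x < eps.

Definition S_Cauchy {X : Type} (S : X -> X -> X -> R) (u : nat -> X) : Prop :=
  forall eps, eps > 0 -> exists k, forall n m, (n >= k)%nat -> (m >= k)%nat ->
    S (u n) (u n) (u m) < eps.

Definition S_complete {X : Type} (S : X -> X -> X -> R) : Prop :=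
  forall u : nat -> X, S_Cauchy S u -> exists x, S_converges S u x.

Fixpoint count_below (B : nat -> Prop) (n : nat) : nat :=
  match n with
  | O => O
  | S n' => (count_below B n' + (if excluded_middle_informative (B n') then 1 else 0))%nat
  end.

Definition has_density (B : nat -> Prop) (d : R) : Prop :=
  Un_cv (fun n => INR (count_below B (S n)) / INR (S n)) d.

Definition stat_converges {X : Type} (S : X -> X -> X -> R) (u : nat -> X) (x : X) : Prop :=
  forall eps, eps > 0 -> has_density (fun n => S (u n) (u n) x >= eps) 0.

Definition stat_Cauchy {X : Type} (S : X -> X -> X -> R) (u : nat -> X) : Prop :=
  forall eps, eps > 0 -> exists N : nat,
    has_density (fun n => S (u n) (u n) (u N) >= eps) 0.

Definition stat_complete {X : Type} (S : X -> X -> X -> R) : Prop :=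
  forall u : nat -> X, stat_Cauchy S u -> exists x, stat_converges S u x.

(* Main.v *)
Require Import Defs.
From Stdlib Require Import Arith Reals Lra Lia Classical ClassicalEpsilon.
Open Scope R_scope.

Lemma count_le_n (B : nat -> Prop) n : (count_below B n <= n)%nat.
Proof.
  induction n; simpl; [lia|].
  destruct (excluded_middle_informative (B n)); lia.
Qed.

Lemma count_le_k (B : nat -> Prop) k :
  (forall i, B i -> (i < k)%nat) -> forall n, (count_below B n <= k)%nat.
Proof.
  intros H n; induction n; simpl; [lia|].
  destruct (excluded_middle_informative (B n)) as [b|b].
  - specialize (H n b). pose proof (count_le_n B n). lia.
  - lia.
Qed.

Lemma count_ge (B : nat -> Prop) k :
  (forall i, (i >= k)%nat -> B i) -> forall n, (n <= count_below B n + k)%nat.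
Proof.
  intros H n; induction n; simpl; [lia|].
  destruct (excluded_middle_informative (B n)) as [b|b].
  - lia.
  - destruct (le_lt_dec k n) as [h|h]. + exfalso; apply b, H; lia. + lia.
Qed.

Lemma finite_density0 (B : nat -> Prop) k :
  (forall i, B i -> (i < k)%nat) -> has_density B 0.
Proof.
  intros H eps Heps.
  destruct (INR_archimed eps (INR k) Heps) as [N HN].
  exists N. intros n Hn. unfold R_dist.
  pose proof (count_le_k B k H (S n)) as Hc.
  apply le_INR in Hc.
  assert (HS : INR N <= INR n) by (apply le_INR; lia).
  rewrite S_INR.
  pose proof (pos_INR n). pose proof (pos_INR (count_below B (S n))).
  rewrite Rminus_0_r, Rabs_right.
  - apply (Rmult_lt_reg_r (INR n + 1)); [lra|].
    unfold Rdiv. rewrite Rmult_assoc, Rinv_l by lra. nra.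
  - apply Rle_ge, Rmult_le_pos; [lra|]. left; apply Rinv_0_lt_compat; lra.
Qed.

Lemma density0_exists (B : nat -> Prop) k :
  has_density B 0 -> exists n, (n >= k)%nat /\ ~ B n.
Proof.
  intros H. apply NNPP; intro Hn.
  assert (HB : forall i, (i >= k)%nat -> B i).
  { intros i Hi. apply NNPP; intro nb. apply Hn; eauto. }
  destruct (H (1/2)) as [N HN]; [lra|].
  set (n := (N + 2 * k + 1)%nat).
  specialize (HN n ltac:(unfold n; lia)).
  pose proof (count_ge B k HB (S n)) as Hc.
  unfold R_dist in HN. rewrite Rminus_0_r in HN.
  assert (Hc2 : (2 * S n <= 2 * count_below B (S n) + 2 * k)%nat) by lia.
  assert (Hk : (2 * k <= S n)%nat) by (unfold n; lia).
  apply le_INR in Hc2. apply le_INR in Hk.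
  rewrite !mult_INR, plus_INR, mult_INR in Hc2. rewrite mult_INR in Hk.
  change (INR 2) with (1+1) in Hc2, Hk.
  set (c := INR (count_below B (S n))) in *.
  set (s := INR (S n)) in *.
  assert (Hs : 0 < s) by (unfold s; apply lt_0_INR; lia).
  assert (c0 : 0 <= c) by apply pos_INR.
  rewrite Rabs_right in HN.
  - apply (Rmult_lt_compat_r s) in HN; [|lra].
    unfold Rdiv in HN. rewrite Rmult_assoc, Rinv_l in HN by lra. rewrite mult_INR in Hc2. change (INR 2) with (1+1) in Hc2. lra.
  - apply Rle_ge, Rmult_le_pos; [lra|]. left; apply Rinv_0_lt_compat; lra.
Qed.

Theorem theorem3p6 (X : Type) (S : X -> X -> X -> R) :
  is_Smetric S -> stat_complete S -> S_complete S.
Proof.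
  intros [Hpos [Hzero Htri]] Hsc u Hc.
  assert (Hxx : forall x, S x x x = 0) by (intro x; apply Hzero; auto).
  assert (Hsym : forall x y, S x x y = S y y x).
  { assert (forall x y, S x x y <= S y y x).
    { intros x y. pose proof (Htri x x y x). rewrite Hxx in H. lra. }
    intros x y; apply Rle_antisym; auto. }
  destruct (Hsc u) as [x Hx].
  { intros eps Heps. destruct (Hc eps Heps) as [k Hk]. exists k.
    apply finite_density0 with k. intros i Hi.
    destruct (le_lt_dec k i) as [h|h]; auto.
    specialize (Hk i k h (le_n k)). lra. }
  exists x. intros eps Heps.
  destruct (Hc (eps/3)) as [k Hk]; [lra|].
  destruct (density0_exists _ k (Hx (eps/3) ltac:(lra))) as [n [Hn Hnb]].
  exists k. intros m Hm.
  pose proof (Htri (u m) (u m) x (u n)).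
  rewrite (Hsym x (u n)) in H.
  specialize (Hk m n Hm Hn). lra.
Qed.
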